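(* Fix $\lambda \geqslant 0$ and let $g(\lambda) = (1-e^{-\lambda})/\lambda$ for $\lambda>0$, $g(0)=1$. For a compactly supported Borel probability measure $\rho$ on $\mathbb R$ with $\operatorname{supp}\rho \subset [0,+\infty)$ and $\langle \rho, x\rangle = \int x\,d\rho(x) \neq 0$, define the measure $$A(\rho) = \left(1 - g(\lambda) + g(\lambda)\frac{x}{\langle \rho, x\rangle}\right)\rho,$$ i.e. the measure with density $x \mapsto 1 - g(\lambda) + g(\lambda)x/\langle\rho,x\rangle$ with respect to $\rho$. Let $\rho_0$ be such a measure, let $\rho_t = A^t(\rho_0)$ for $t \in \mathbb N$, and let $\bar x_t = \langle \rho_t, x\rangle$. Then for every $t \in \mathbb N$, $\bar x_{t+1} - \bar x_t \geqslant 0$.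
   Context: Probability densities are identified with Borel probability measures (nonnegative Radon measures of total mass $1$) on $\mathbb R$; for a measure $\rho$ and a function $\phi$, $\langle \rho,\phi\rangle = \int \phi\,d\rho$. $\mathbb N$ includes $0$. *)

(* Defs.v *)
From HB Require Import structures.
From mathcomp Require Import all_boot all_order all_algebra.
From mathcomp Require Import all_classical all_reals all_analysis measurable_realfun.
Set Implicit Arguments. Unset Strict Implicit. Unset Printing Implicit Defensive.
Import Order.TTheory GRing.Theory Num.Theory.
Import numFieldNormedType.Exports.
Local Open Scope classical_set_scope.
Local Open Scope ring_scope.

Definition gfun {R : realType} (lam : R) : R :=
  if lam == 0 then 1 else (1 - expR (- lam)) / lam.

Definition mean {R : realType} (rho : {measure set R -> \bar R}) : \bar R :=
  (\int[rho]_x (x%:E))%E.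

Section affdens.
Context {R : realType} (mu : {measure set R -> \bar R}) (a b : R).

Definition affdens_fun (A : set R) : \bar R :=
  (\int[mu]_(x in A) (Num.max 0 (a + b * x))%:E)%E.

Let dens_meas : measurable_fun setT (fun x : R => ((Num.max 0 (a + b * x))%:E : \bar R)).
Proof.
apply/measurable_EFinP; apply: measurable_maxr => //.
by apply: measurable_funD => //; apply: measurable_funM.
Qed.

Let affdens0 : affdens_fun set0 = 0%E.
Proof. by rewrite /affdens_fun integral_set0. Qed.

Let affdens_ge0 A : (0 <= affdens_fun A)%E.
Proof. by apply: integral_ge0 => x _; rewrite lee_fin le_max lexx. Qed.

Let affdens_sa : semi_sigma_additive affdens_fun.
Proof.
apply: semi_sigma_additive_nng_induced => // x.
by rewrite lee_fin le_max lexx.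
Qed.

HB.instance Definition _ := isMeasure.Build _ _ _ affdens_fun
  affdens0 affdens_ge0 affdens_sa.

Definition affdens : {measure set R -> \bar R} := affdens_fun.
End affdens.

(* A(rho) = (1 - g + g x / <rho,x>) rho.  The density is written with a
   truncation at 0, which is immaterial on supp rho. *)
Definition Aop {R : realType} (lam : R) (rho : {measure set R -> \bar R})
  : {measure set R -> \bar R} :=
  affdens rho (1 - gfun lam) (gfun lam / fine (mean rho)).

(* Main.v *)
Require Import Defs.
From HB Require Import structures.
From mathcomp Require Import all_boot all_order all_algebra.
From mathcomp Require Import all_classical all_reals all_analysis measurable_realfun.
From mathcomp Require Import ring lra.
Import Order.TTheory GRing.Theory Num.Theory.
Local Open Scope classical_set_scope.
Local Open Scope ring_scope.

Module Aux.
Import numFieldNormedType.Exports.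
Section SA.
Import numFieldNormedType.Exports.
Local Open Scope classical_set_scope.
Local Open Scope ring_scope.
Import HBNNSimple.
Local Open Scope ereal_scope.

Section dens.
Context {R : realType} (mu : {measure set R -> \bar R}) (a b : R).
Let g : R -> \bar R := fun x => (Num.max 0 (a + b * x))%:E.
Let mg : measurable_fun setT g.
Proof.
apply/measurable_EFinP; apply: measurable_maxr => //.
by apply: measurable_funD => //; apply: measurable_funM.
Qed.
Let g0 x : 0 <= g x. Proof. by rewrite lee_fin le_max lexx. Qed.

Lemma dens_change f E : measurable E -> measurable_fun E f ->
  (forall x, E x -> 0 <= f x) ->
  \int[mu]_(x in E) (f x * g x) = \int[affdens mu a b]_(x in E) f x.
Proof.
move=> mE mf f0.
pose h := nnsfun_approx mE mf.
have -> : \int[affdens mu a b]_(x in E) f x =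
    lim (\int[affdens mu a b]_(x in E) (EFin \o h n) x @[n --> \oo]).
  have fE x : E x -> f x = lim ((EFin \o h n) x @[n --> \oo]).
    by move=> Ex; apply/esym/cvg_lim => //; exact: cvg_nnsfun_approx.
  under eq_integral => x /[!inE] /fE -> //.
  apply: monotone_convergence => //.
  - move=> n; apply/measurable_EFinP.
    by apply: (measurable_funS measurableT) => //; exact/measurable_funP.
  - by move=> n x Ex //=; rewrite lee_fin.
  - by move=> x Ex u v uv; rewrite lee_fin; exact/lefP/nd_nnsfun_approx.
have -> : \int[mu]_(x in E) (f x * g x) =
    lim (\int[mu]_(x in E) ((EFin \o h n) \* g) x @[n --> \oo]).
  have fg x : E x -> f x * g x = lim (((EFin \o h n) \* g) x @[n --> \oo]).
    by move=> Ex; apply/esym/cvg_lim => //; apply: cvgeZr;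
      [rewrite /g; by []|exact: cvg_nnsfun_approx].
  under eq_integral => x /[!inE] /fg -> //.
  apply: monotone_convergence => [//| | |].
  - move=> n; apply/emeasurable_funM; apply/measurable_funTS.
      exact/measurable_EFinP.
    exact: mg.
  - by move=> n x Ex /=; apply: mule_ge0 => //; rewrite lee_fin; exact: fun_ge0.
  - move=> x Ex u v uv/=; rewrite lee_wpmul2r //; try exact: g0; rewrite lee_fin; exact/lefP/nd_nnsfun_approx.
suff suf n : \int[mu]_(x in E) ((EFin \o h n) x * g x) =
    \int[affdens mu a b]_(x in E) (EFin \o h n) x.
  by under eq_fun do rewrite suf.
transitivity (\int[affdens mu a b]_(x in E)
   (\sum_(y \in range (h n)) (y * \1_(h n @^-1` [set y]) x)%:E)); last first.
  by apply: eq_integral => t tE; rewrite /= fimfunE -fsumEFin.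
have indich m r : measurable_fun E (fun x => (r * \1_(h m @^-1` [set r]) x)%:E).
  by apply: (measurable_comp measurableT) => //; exact: measurable_funM.
rewrite ge0_integral_fsum//; last by move=> m y Ey; exact: nnfun_muleindic_ge0.
transitivity (\int[mu]_(x in E) (\sum_(y \in range (h n))
    (y * \1_(h n @^-1` [set y]) x)%:E * g x)).
  under [RHS]eq_integral => x xE.
    rewrite -ge0_mule_fsuml => [|y]; last exact: nnfun_muleindic_ge0.
    rewrite fsumEFin // -(fimfunE _ x); over.
  by [].
rewrite ge0_integral_fsum//; last 2 first.
  - move=> y; apply: emeasurable_funM => //; apply: measurable_funTS.
    exact: mg.
  - by move=> m y Ey; rewrite mule_ge0 ?g0// nnfun_muleindic_ge0.
apply: eq_fsbigr => r rhn.
under [RHS]eq_integral do rewrite EFinM.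
rewrite integralZl_indic_nnsfun => //.
under eq_integral do rewrite EFinM -muleA.
rewrite ge0_integralZl//.
- under eq_integral do rewrite muleC.
  rewrite (eq_integral (g \_ (h n @^-1` [set r]))); last first.
    by move=> x xE; rewrite epatch_indic.
  rewrite -integral_mkcondr integral_indic// setIC.
  by [].
- apply: emeasurable_funM; first exact/measurable_EFinP.
  exact: measurable_funTS mg.
- by move=> t Et; apply: mule_ge0 => //; rewrite ?lee_fin; try exact: fun_ge0; exact: g0.
- by move: rhn; rewrite inE => -[t _ <-]; rewrite lee_fin.
Qed.
End dens.

End SA.
Section SB.
Import numFieldNormedType.Exports.
Local Open Scope classical_set_scope.
Local Open Scope ring_scope.

Lemma gfun_ge0 {R : realType} (lam : R) : 0 <= lam -> 0 <= gfun lam.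
Proof.
move=> l0; rewrite /gfun; case: eqP => // /eqP ln0.
apply: divr_ge0 => //; rewrite subr_ge0 expR_le1 oppr_le0 //.
Qed.

Lemma gfun_le1 {R : realType} (lam : R) : 0 <= lam -> gfun lam <= 1.
Proof.
move=> l0; rewrite /gfun; case: eqP => // /eqP ln0.
have lp : 0 < lam by rewrite lt_def ln0.
rewrite ler_pdivrMr // mul1r lerBlDr addrC -lerBlDl.
have := expR_ge1Dx (- lam); rewrite addrC.
move=> h; lra.
Qed.

Local Open Scope ereal_scope.

Definition bad {R : realType} (M : R) := [set x : R | (x < 0)%R \/ (M < x)%R].

Lemma bad_meas {R : realType} (M : R) : measurable (bad M).
Proof.
have -> : bad M = `]-oo, 0%R[ `|` `]M, +oo[.
  by apply/seteqP; split => x /=; rewrite !in_itv /= andbT.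
by apply: measurableU.
Qed.

Lemma restrictD {R : realType} (M : R) (rho : {measure set R -> \bar R}) (f : R -> \bar R) :
  rho (bad M) = 0 -> measurable_fun setT f ->
  \int[rho]_x f x = \int[rho]_(x in `[0%R, M]) f x.
Proof.
move=> r0 mf.
rewrite [RHS]integral_mkcond.
apply: ae_eq_integral => //.
  by apply/(measurable_restrictT _ _).1 => //; exact: measurable_funTS mf.
exists (bad M); split => //; first exact: bad_meas.
move=> x /= H; apply: contrapT => Hb; apply: H => _.
rewrite /patch; case: ifPn => // /negP H; exfalso; apply: H; apply/mem_set; rewrite /= in_itv /=.
apply/andP; split; rewrite leNgt; apply/negP => h; apply: Hb; by [left|right].
Qed.

End SB.
Section SC.
Import numFieldNormedType.Exports.
Local Open Scope classical_set_scope.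
Local Open Scope ring_scope.
Local Open Scope ereal_scope.

Lemma step {R : realType} (lam M : R) (rho : {measure set R -> \bar R}) (m : R) :
  (0 <= lam)%R -> rho setT = 1 -> rho (bad M) = 0 -> mean rho = m%:E -> (0 < m)%R ->
  exists m' : R, [/\ (m <= m')%R, Aop lam rho setT = 1, Aop lam rho (bad M) = 0
     & mean (Aop lam rho) = m'%:E].
Proof.
move=> l0 rT rb mr m0.
set G := gfun lam.
have G0 : (0 <= G)%R by exact: gfun_ge0.
have G1 : (G <= 1)%R by exact: gfun_le1.
set a := (1 - G)%R; set b := (G / m)%R.
have ha : (0 <= a)%R by rewrite /a subr_ge0.
have hb : (0 <= b)%R by rewrite /b divr_ge0 // ltW.
have bm : (b * m = G)%R by rewrite /b divfK // gt_eqF.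
have -> : Aop lam rho = affdens rho a b by rewrite /Aop mr.
set D := `[0%R, M]%classic.
have mD : measurable D by exact: measurable_itv.
have Dx x : D x -> (0 <= x /\ x <= M)%R.
  by rewrite /D /= in_itv /= => /andP.
have dD x : D x -> Num.max 0%R (a + b * x)%R = (a + b * x)%R.
  move=> /Dx [x0 _]; apply/max_idPr; apply: addr_ge0 => //; exact: mulr_ge0.
have mx : measurable_fun setT (fun x : R => x%:E) by apply/measurable_EFinP.
have mg : measurable_fun setT (fun x : R => (Num.max 0 (a + b * x))%:E).
  apply/measurable_EFinP; apply: measurable_maxr => //.
  by apply: measurable_funD => //; apply: measurable_funM.
have rD : rho D = 1.
  have := @restrictD _ M rho (cst 1) rb (measurable_cst _).
  by rewrite !integral_cst // !mul1e rT => <-.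
have mrD : \int[rho]_(x in D) x%:E = m%:E by rewrite -restrictD // -mr.
have x0D x : D x -> 0 <= x%:E by move=> /Dx [x0 _]; rewrite lee_fin.
have bx0D x : D x -> 0 <= b%:E * x%:E.
  by move=> /Dx [x0 _]; rewrite -EFinM lee_fin mulr_ge0.
have mxD : measurable_fun D (fun x : R => x%:E) by exact: measurable_funTS mx.
have mbx : measurable_fun D (fun x : R => b%:E * x%:E).
  by apply: emeasurable_funM => //.
have nuT : affdens rho a b setT = 1.
  have := integral_cst (affdens rho a b) measurableT 1.
  rewrite mul1e => <-.
  rewrite -(@dens_change _ rho a b (cst 1) setT) //.
  rewrite (@restrictD _ M rho (fun x => cst 1 x * (Num.max 0 (a + b * x))%:E)) //; last by apply: emeasurable_funM.
  rewrite (eq_integral (fun x => a%:E + b%:E * x%:E)); last first.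
    by move=> x; rewrite inE => /dD ->; rewrite mul1e EFinD EFinM.
  rewrite ge0_integralD //.
  rewrite integral_cst // rD mule1 ge0_integralZl_EFin //.
  by rewrite mrD -EFinM -EFinD bm /a subrK.
have mind : measurable_fun setT (fun x : R => (\1_(bad M) x : R)%:E).
  by apply/measurable_EFinP; exact: measurable_indic (bad_meas M).
have nub : affdens rho a b (bad M) = 0.
  have := integral_indic (affdens rho a b) measurableT (bad_meas M).
  rewrite setIT => <-.
  rewrite -(@dens_change _ rho a b (fun x => (\1_(bad M) x : R)%:E) setT) //.
  rewrite (@restrictD _ M rho (fun x => (\1_(bad M) x : R)%:E * (Num.max 0 (a + b * x))%:E)) //; last by apply: emeasurable_funM.
  apply: integral0_eq => x /Dx [x0 xM].
  rewrite indicE memNset ?mul0e //.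
  by case; rewrite ltNge ?x0 ?xM.
have mx2 : measurable_fun D (fun x : R => a%:E * x%:E + b%:E * (x * x)%:E).
  apply/measurable_EFinP => /=.
  apply: measurable_funD; apply: measurable_funM => //.
  exact: measurable_funM.
have meanE : mean (affdens rho a b) =
    \int[rho]_(x in D) (a%:E * x%:E + b%:E * (x * x)%:E).
  rewrite /mean (@restrictD _ M (affdens rho a b) (fun x => x%:E)) //.
  rewrite -dens_change //.
  apply: eq_integral => x; rewrite inE => xD; rewrite dD // -!EFinM -EFinD.
  by congr EFin; ring.
set I := \int[rho]_(x in D) _ in meanE.
have I0 : 0 <= I.
  apply: integral_ge0 => x /Dx [x0 _]; rewrite -!EFinM -EFinD lee_fin.
  by apply: addr_ge0; apply: mulr_ge0 => //; apply: mulr_ge0.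
have Ile : I <= (a * M + b * (M * M))%:E.
  have := integral_cst rho mD (a * M + b * (M * M))%:E; rewrite rD mule1 => <-.
  apply: ge0_le_integral => //.
  - move=> x /Dx [x0 _]; rewrite -!EFinM -EFinD lee_fin.
    by apply: addr_ge0; apply: mulr_ge0 => //; apply: mulr_ge0.
  - move=> x /Dx [x0 xM]; rewrite -!EFinM -EFinD lee_fin.
    apply: lerD; first exact: ler_wpM2l.
    by apply: ler_wpM2l => //; apply: ler_pM.
have Ifin : I \is a fin_num.
  by rewrite ge0_fin_numE // (le_lt_trans Ile) // ltry.
exists (fine I); split => //; last by rewrite meanE fineK.
have key : ((a + 2 * b * m) * m)%:E <= I + (b * (m * m))%:E.
  have -> : ((a + 2 * b * m) * m)%:E = \int[rho]_(x in D) ((a + 2 * b * m)%:E * x%:E).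
    rewrite ge0_integralZl_EFin // ?mrD ?EFinM //.
    by apply: addr_ge0 => //; apply: mulr_ge0; [apply: mulr_ge0 | exact: ltW].
  have -> : (b * (m * m))%:E = \int[rho]_(x in D) (cst (b * (m * m))%:E x).
    by rewrite integral_cst // rD mule1.
  have f1ge x : D x -> 0 <= a%:E * x%:E + b%:E * (x * x)%:E.
    move=> /Dx [x0 _]; rewrite -!EFinM -EFinD lee_fin.
    by apply: addr_ge0; apply: mulr_ge0 => //; apply: mulr_ge0.
  have cge x : D x -> 0 <= (cst (b * (m * m))%:E x).
    by move=> _; rewrite lee_fin; apply: mulr_ge0 => //; apply: mulr_ge0; exact: ltW.
  rewrite /I -ge0_integralD //.
  have a2ge : (0 <= a + 2 * b * m)%R.
    by apply: addr_ge0 => //; apply: mulr_ge0; [apply: mulr_ge0 | exact: ltW].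
  apply: ge0_le_integral => //.
  - by move=> x /Dx [x0 _]; rewrite -EFinM lee_fin mulr_ge0.
  - by apply: emeasurable_funM.
  - by apply: emeasurable_funD.
  - move=> x _; rewrite /= -!EFinM -!EFinD lee_fin.
    have := mulr_ge0 hb (sqr_ge0 (x - m)).
    by move=> h; nra.
move: key; rewrite -(fineK Ifin) -EFinD lee_fin => key.
have h1 : (b * (m * m) = G * m)%R by rewrite mulrA bm.
have h2 : ((a + 2 * b * m) * m = a * m + 2 * G * m)%R by rewrite -mulrA bm; ring.
rewrite h1 h2 /a in key; nra.
Qed.

End SC.
End Aux.
Import Aux.

Theorem mainTheorem1 (R : realType) (lam : R) (rho0 : {measure set R -> \bar R}) :
  0 <= lam ->
  rho0 setT = 1%E ->
  (exists M : R, rho0 [set x : R | x < 0 \/ M < x] = 0%E) ->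
  mean rho0 != 0%E ->
  forall t : nat,
    (mean (iter t.+1 (Aop lam) rho0) - mean (iter t (Aop lam) rho0) >= 0)%E.
Proof.
move=> l0 rT [M rb] m0.
have rb' : rho0 (bad M) = 0%E by [].
have [m [mE mpos]] : exists m : R, mean rho0 = m%:E /\ 0 < m.
  have mD : measurable (`[0%R, M]%classic : set R) by exact: measurable_itv.
  have mx : measurable_fun setT (fun x : R => x%:E) by apply/measurable_EFinP.
  have rD : rho0 `[0%R, M]%classic = 1%E.
    have := @restrictD _ M rho0 (cst 1%E) rb' (measurable_cst _).
    by rewrite !integral_cst // !mul1e rT => <-.
  have mr : mean rho0 = (\int[rho0]_(x in `[0%R, M]) x%:E)%E by rewrite /mean (restrictD M) //.
  have I0 : (0 <= mean rho0)%E.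
    by rewrite mr; apply: integral_ge0 => x; rewrite /= in_itv /= => /andP[x0 _]; rewrite lee_fin.
  have Ile : (mean rho0 <= M%:E)%E.
    rewrite mr; have := integral_cst rho0 mD M%:E; rewrite rD mule1 => <-.
    apply: ge0_le_integral => //.
    - by move=> x; rewrite /= in_itv /= => /andP[x0 _]; rewrite lee_fin.
    - by move=> x; rewrite /= in_itv /= => /andP[_ xM]; rewrite lee_fin.
  have Ifin : mean rho0 \is a fin_num.
    by rewrite ge0_fin_numE // (le_lt_trans Ile) // ltry.
  exists (fine (mean rho0)); split; first by rewrite fineK.
  rewrite lt_def; apply/andP; split; last by rewrite -lee_fin fineK.
  by apply: contra m0 => /eqP h; rewrite -(fineK Ifin) h.
have inv : forall t, exists m' : R, [/\ iter t (Aop lam) rho0 setT = 1%E,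
    iter t (Aop lam) rho0 (bad M) = 0%E, mean (iter t (Aop lam) rho0) = m'%:E & 0 < m'].
  elim=> [|t [m1 [h1 h2 h3 h4]]]; first by exists m.
  have [m2 [l12 e1 e2 e3]] := @step _ lam M _ m1 l0 h1 h2 h3 h4.
  exists m2; split => //; exact: lt_le_trans l12.
move=> t; have [m1 [h1 h2 h3 h4]] := inv t.
have [m2 [l12 e1 e2 e3]] := @step _ lam M _ m1 l0 h1 h2 h3 h4.
by rewrite /= e3 h3 -EFinB lee_fin subr_ge0.
Qed.
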